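(* Let $(\mathcal N,\mathcal M,\mathbf w,\mathbf v)$ be a chore-allocation instance with $w_1\ge w_i$ for all $i$. Define new weights $w'_i=w_1/2^{p_i}$ where $p_i=\lfloor\log_{1/2}(w_i/w_1)\rfloor$ (so $w_i\le w'_i<2w_i$), keeping agents, items and cost functions unchanged. Then for every agent $a_i$, the weighted maximin share of $a_i$ in the new instance is at most twice the weighted maximin share of $a_i$ in the original instance.
   Context: A chore-allocation instance consists of agents $\mathcal N=\{a_1,\dots,a_n\}$, a finite set $\mathcal M$ of indivisible items, positive weights $w_1,\dots,w_n$, and additive cost functions $v_i:2^{\mathcal M}\to\mathbb R_{\ge0}$. An allocation is an ordered partition $(A_1,\dots,A_n)$ of $\mathcal M$ (bundles may be empty), $\mathcal A$ the set of all allocations. The weighted maximin share of $a_i$ (with respect to weights $w$) is $\mathsf{WMMS}_i=w_i\cdot\min_{(A_1,\dots,A_n)\in\mathcal A}\max_{j\in[n]}\frac{v_i(A_j)}{w_j}$. *)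

(* Defs.v *)
From HB Require Import structures.
From mathcomp Require Import all_boot all_order all_algebra.
From mathcomp Require Import all_classical all_reals exp.
Set Implicit Arguments. Unset Strict Implicit. Unset Printing Implicit Defensive.
Import Order.TTheory GRing.Theory Num.Theory.
Local Open Scope ring_scope.

(* Agents are 'I_n.+1 (agent a_1 is ord0), items form a finType M.
   An allocation (ordered partition, bundles possibly empty) is a
   function assigning each item to an agent: A_j = {x | a x = j}. *)

Section WMMS.
Variables (R : realType) (n : nat) (M : finType).

Definition cost (v : 'I_n.+1 -> M -> R) (i : 'I_n.+1) (S : {set M}) : R :=
  \sum_(x in S) v i x.

Definition bundle (a : {ffun M -> 'I_n.+1}) (j : 'I_n.+1) : {set M} :=
  [set x | a x == j].

Definition alloc_val (w : 'I_n.+1 -> R) (v : 'I_n.+1 -> M -> R)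
    (i : 'I_n.+1) (a : {ffun M -> 'I_n.+1}) : R :=
  \big[Num.max/ cost v i (bundle a ord0) / w ord0]_(j < n.+1)
     (cost v i (bundle a j) / w j).

Definition WMMS (w : 'I_n.+1 -> R) (v : 'I_n.+1 -> M -> R) (i : 'I_n.+1) : R :=
  w i * \big[Num.min/ alloc_val w v i [ffun=> ord0]]_(a : {ffun M -> 'I_n.+1})
          alloc_val w v i a.

Definition pexp (w : 'I_n.+1 -> R) (i : 'I_n.+1) : int :=
  Num.floor (ln (w i / w ord0) / ln (2^-1)).

Definition rounded_weights (w : 'I_n.+1 -> R) (i : 'I_n.+1) : R :=
  w ord0 / (2 : R) ^ (pexp w i).

End WMMS.

(* Main.v *)
Require Import Defs.
From HB Require Import structures.
From mathcomp Require Import all_boot all_order all_algebra.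
From mathcomp Require Import all_classical all_reals exp.
Import Order.TTheory GRing.Theory Num.Theory.
Local Open Scope ring_scope.

Lemma wbounds (R : realType) (n : nat) (w : 'I_n.+1 -> R)
    (hw_pos : forall i, 0 < w i)
    (hw_max : forall i, w i <= w ord0) i :
  w i <= rounded_weights w i /\ rounded_weights w i <= 2 * w i.
Proof.
rewrite /rounded_weights /pexp.
have w0 := hw_pos ord0; have wi := hw_pos i.
set r := w i / w ord0.
have r0 : 0 < r by rewrite divr_gt0.
have r1 : r <= 1 by rewrite ler_pdivrMr // mul1r.
have l2 : 0 < ln (2:R) by apply: ln_gt0; rewrite ltr1n.
have lh : ln (2^-1 : R) = - ln 2 by rewrite lnV // posrE.
have lr : ln r <= 0 by apply: ln_le0.
have lri : ln (r^-1) = - ln r by rewrite lnV // posrE.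
rewrite lh.
set x := ln r / - ln 2.
have x0 : 0 <= x by rewrite /x invrN mulrN -mulNr divr_ge0 // ?oppr_ge0 // ltW.
have := floor_itv x.
have := floor_ge0 x; rewrite x0.
case: (Num.floor x) => // k _ /andP [hk1 hk2].
rewrite -exprnP.
have hx : x = ln (r^-1) / ln 2 by rewrite /x lri invrN mulrN mulNr.
have p2k : 0 < (2:R) ^+ k by rewrite exprn_gt0.
have lk : ln ((2:R) ^+ k) = k%:R * ln 2 by rewrite lnXn // mulrC mulr_natr.
have lk1 : ln ((2:R) ^+ k.+1) = (k%:R + 1) * ln 2 by rewrite lnXn // natr1 mulr_natl.
have rinv : r^-1 = w ord0 / w i by rewrite /r invf_div.
have A : (2:R) ^+ k <= r^-1.
  rewrite -ler_ln ?posrE ?invr_gt0 // lk.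
  rewrite -ler_pdivlMr // -hx; exact: hk1.
have B : r^-1 < (2:R) ^+ k.+1.
  rewrite -ltr_ln ?posrE ?invr_gt0 ?exprn_gt0 // lk1.
  by rewrite -ltr_pdivrMr // -hx; move: hk2; rewrite intrD.
rewrite rinv in A B.
split.
  by rewrite ler_pdivlMr // mulrC -ler_pdivlMr.
rewrite ler_pdivrMr // exprS in B *.
move: B; rewrite ltr_pdivrMr // => B.
apply: ltW; by rewrite -mulrA (mulrC (w i)) mulrA.
Qed.
Lemma bigmax_mono (R : realType) (I : finType) (x0 y0 : R) (F G : I -> R) :
  x0 <= y0 -> (forall j, F j <= G j) ->
  \big[Num.max/x0]_(j : I) F j <= \big[Num.max/y0]_(j : I) G j.
Proof.
move=> h hF; apply: (big_ind2 (fun x y => x <= y)) => // a b c d hab hcd.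
rewrite ge_max !le_max; apply/andP; split.
  by rewrite hab. by rewrite hcd orbT.
Qed.

Lemma bigmin_mono (R : realType) (I : finType) (x0 y0 : R) (F G : I -> R) :
  x0 <= y0 -> (forall j, F j <= G j) ->
  \big[Num.min/x0]_(j : I) F j <= \big[Num.min/y0]_(j : I) G j.
Proof.
move=> h hF; apply: (big_ind2 (fun x y => x <= y)) => // a b c d hab hcd.
rewrite le_min !ge_min; apply/andP; split.
  by rewrite hab. by rewrite hcd orbT.
Qed.

Lemma bigmin_ge0 (R : realType) (I : finType) (x0 : R) (F : I -> R) :
  0 <= x0 -> (forall j, 0 <= F j) -> 0 <= \big[Num.min/x0]_(j : I) F j.
Proof.
move=> h hF; apply: (big_ind (fun x => 0 <= x)) => // a b ha hb.
by rewrite le_min ha hb.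
Qed.

Lemma fin_ineq (R : realType) (x y m m' : R) :
  0 <= x -> m' <= m -> 0 <= m -> x <= 2 * y -> x * m' <= 2 * (y * m).
Proof.
move=> hx hm hm0 hxy; apply: (le_trans (ler_wpM2l hx hm)).
by rewrite mulrA; apply: ler_wpM2r.
Qed.

Theorem mainTheorem2 (R : realType) (n : nat) (M : finType)
    (w : 'I_n.+1 -> R) (v : 'I_n.+1 -> M -> R)
    (hw_pos : forall i, 0 < w i)
    (hw_max : forall i, w i <= w ord0)
    (hv_nonneg : forall i x, 0 <= v i x) :
  forall i : 'I_n.+1,
    WMMS (rounded_weights w) v i <= 2 * WMMS w v i.
Proof.
move=> i.
have hb := @wbounds _ _ w hw_pos hw_max.
have c0 : forall j S, 0 <= cost v j S by move=> j S; apply: sumr_ge0 => x _.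
have term : forall S j, cost v i S / rounded_weights w j <= cost v i S / w j.
  move=> S j; apply: ler_wpM2l => //.
  have [h1 _] := hb j.
  by rewrite lef_pV2 ?posrE // (lt_le_trans (hw_pos j) h1).
have av : forall a, alloc_val (rounded_weights w) v i a <= alloc_val w v i a.
  by move=> a; apply: bigmax_mono.
have av0 : forall a, 0 <= alloc_val w v i a.
  move=> a; apply: (big_ind (fun x => 0 <= x)).
  - by rewrite divr_ge0 // ltW.
  - by move=> x y hx hy; rewrite le_max hx.
  - by move=> j _; rewrite divr_ge0 // ltW.
rewrite /WMMS.
have [h1 h2] := hb i.
set A := (X in rounded_weights w i * X).
set B := (X in 2 * (w i * X)).
have e1 : A <= B by apply: bigmin_mono.
have m0 : 0 <= B by apply: bigmin_ge0.
have wp : 0 <= rounded_weights w i by apply: le_trans h1; apply: ltW.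
exact: (@fin_ineq _ _ _ _ _ wp e1 m0 h2).
Qed.
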